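(* Let $t_o<t_f$ be nonnegative integers, let $p:\{t_o,\dots,t_f-1\}\to\mathbb{R}$ and $q:\{t_o,\dots,t_f-1\}\to\mathbb{R}_{\ge0}$ satisfy $q(t)=0\implies p(t)=0$ for every $t$, and let $r(\tau)=\alpha\tau$ for integers $\tau>0$, with $\alpha\in\mathbb{R}$. For integers $t_o\le t_0<t_1\le t_f$ with $\sum_{t=t_0}^{t_1-1}q(t)>0$ define $$\psi(t_0,t_1)=\frac{\sum_{t=t_0}^{t_1-1}p(t)+r(t_1-t_0)}{\sum_{t=t_0}^{t_1-1}q(t)}.$$ Let $\Psi$ be the set of integer pairs with $t_o\le t_0<t_1\le t_f$, $\Psi_q=\{(t_0,t_1)\in\Psi:q(t)=0\ \text{for all } t_0\le t<t_1\}$, and $\tilde\Psi_q=\{t\in\{t_o,\dots,t_f-1\}:q(t)=0\}$. Then: (i) if $r(\tau)\le0$ for all $\tau\in\mathbb{Z}_{>0}$, $\displaystyle\max_{(t_0,t_1)\in\Psi\setminus\Psi_q}\psi(t_0,t_1)=\max_{t\in\{t_o,\dots,t_f-1\}\setminus\tilde\Psi_q}\psi(t,t+1)$; (ii) if $r(\tau)\ge0$ for all $\tau\in\mathbb{Z}_{>0}$, $\displaystyle\min_{(t_0,t_1)\in\Psi\setminus\Psi_q}\psi(t_0,t_1)=\min_{t\in\{t_o,\dots,t_f-1\}\setminus\tilde\Psi_q}\psi(t,t+1)$; where $\psi(t,t+1)=\dfrac{p(t)+r(1)}{q(t)}$.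
   Context: This is the discrete-time fractional function $\frac{\sum p+r}{\sum q+s}$ with the discrete linear map $s$ in the denominator identically zero; $r:\mathbb{Z}_{>0}\to\mathbb{R}$ is a discrete linear mapping. *)

(* Defs.v *)
From mathcomp Require Import all_boot all_order all_algebra.
Set Implicit Arguments. Unset Strict Implicit. Unset Printing Implicit Defensive.
Import Order.TTheory GRing.Theory Num.Theory.
Local Open Scope ring_scope.

Definition rlin (R : realFieldType) (alpha : R) (tau : nat) : R := alpha * tau%:R.

Definition psi (R : realFieldType) (p q : nat -> R) (alpha : R) (t0 t1 : nat) : R :=
  (\sum_(t0 <= t < t1) p t + rlin alpha (t1 - t0)) / (\sum_(t0 <= t < t1) q t).

Definition in_Psi_minus_Psiq (R : realFieldType) (q : nat -> R) (to tf t0 t1 : nat) : Prop :=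
  [/\ (to <= t0)%N, (t0 < t1)%N, (t1 <= tf)%N & exists t, (t0 <= t < t1)%N /\ q t != 0].

Definition pair_vals (R : realFieldType) (p q : nat -> R) (alpha : R) (to tf : nat) (v : R) : Prop :=
  exists t0 t1, in_Psi_minus_Psiq q to tf t0 t1 /\ v = psi p q alpha t0 t1.

Definition single_vals (R : realFieldType) (p q : nat -> R) (alpha : R) (to tf : nat) (v : R) : Prop :=
  exists t, [/\ (to <= t < tf)%N, q t != 0 & v = psi p q alpha t t.+1].

Definition is_max (R : realFieldType) (S : R -> Prop) (M : R) : Prop :=
  S M /\ forall v, S v -> v <= M.
Definition is_min (R : realFieldType) (S : R -> Prop) (M : R) : Prop :=
  S M /\ forall v, S v -> M <= v.

(* Main.v *)
Require Import Defs.
From mathcomp Require Import all_boot all_order all_algebra.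
Import Order.TTheory GRing.Theory Num.Theory.
Local Open Scope ring_scope.

Section Aux.
Variable R : realFieldType.

Lemma sum_lt (F G : nat -> R) a b :
  (forall t, (a <= t < b)%N -> F t <= G t) ->
  (exists t, (a <= t < b)%N /\ F t < G t) ->
  \sum_(a <= t < b) F t < \sum_(a <= t < b) G t.
Proof.
move=> hle [t [/andP[hat htb] hlt]].
rewrite !(@big_cat_nat _ _ _ t a b _ _ hat (ltnW htb)) /=.
rewrite !(big_ltn htb).
apply: ler_ltD.
  apply: ler_sum_nat => i /andP[h1 h2]; apply: hle.
  by rewrite h1 /= (leq_trans h2 (ltnW htb)).
apply: ltr_leD => //.
apply: ler_sum_nat => i /andP[h1 h2]; apply: hle.
by rewrite h2 andbT (leq_trans hat (ltnW h1)).
Qed.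

Lemma numE (p : nat -> R) alpha t0 t1 :
  \sum_(t0 <= t < t1) p t + rlin alpha (t1 - t0) = \sum_(t0 <= t < t1) (p t + alpha).
Proof.
by rewrite big_split /= sumr_const_nat /rlin mulr_natr.
Qed.

Lemma singleE (p q : nat -> R) alpha t : psi p q alpha t t.+1 = (p t + alpha) / q t.
Proof. by rewrite /psi numE !big_nat1. Qed.

Lemma psiN (p q : nat -> R) alpha t0 t1 :
  psi (fun t => - p t) q (- alpha) t0 t1 = - psi p q alpha t0 t1.
Proof. by rewrite /psi /rlin sumrN mulNr -opprD mulNr. Qed.

Lemma maxpart to tf (p q : nat -> R) alpha
  (hq0 : forall t, (to <= t < tf)%N -> 0 <= q t)
  (hqp : forall t, (to <= t < tf)%N -> q t = 0 -> p t = 0)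
  (ha : alpha <= 0) M :
  is_max (pair_vals p q alpha to tf) M <-> is_max (single_vals p q alpha to tf) M.
Proof.
have sub : forall v, single_vals p q alpha to tf v -> pair_vals p q alpha to tf v.
  move=> v [t [/andP[h1 h2] hq ->]]; exists t, t.+1; split => //; split => //.
  by exists t; rewrite leqnn ltnSn.
have Dpos : forall t0 t1, in_Psi_minus_Psiq q to tf t0 t1 -> 0 < \sum_(t0 <= t < t1) q t.
  move=> t0 t1 [h1 h2 h3 [t [ht hqt]]].
  apply: (@le_lt_trans _ _ (\sum_(t0 <= i < t1) (0:R))); first by rewrite big1.
  apply: sum_lt.
    move=> i /andP[i1 i2]; apply: hq0.
    by rewrite (leq_trans h1 i1) (leq_trans i2 h3).
  exists t; split => //; rewrite lt_def hqt /=; apply: hq0.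
  case/andP: ht => i1 i2.
  by rewrite (leq_trans h1 i1) (leq_trans i2 h3).
split.
- move=> [[t0 [t1 [hin ->]]] hmax].
  have hD := Dpos _ _ hin.
  case: hin => h1 h2 h3 [t [ht hqt]].
  have [/hasP [s hs /andP[hqs hMs]] | /hasPn hno] :=
    boolP (has (fun s => (q s != 0) && (psi p q alpha t0 t1 <= psi p q alpha s s.+1))
                (index_iota t0 t1)).
  + have hs' : (to <= s < tf)%N.
      move: hs; rewrite mem_index_iota => /andP[i1 i2].
      by rewrite (leq_trans h1 i1) (leq_trans i2 h3).
    have hsv : single_vals p q alpha to tf (psi p q alpha s s.+1) by exists s.
    have := hmax _ (sub _ hsv) => hle.
    have -> : psi p q alpha t0 t1 = psi p q alpha s s.+1 by apply/eqP; rewrite eq_le hMs hle.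
    split => // v hv; apply: (le_trans (hmax _ (sub _ hv))); rewrite hMs //.
  + exfalso.
    set M0 := psi p q alpha t0 t1.
    have : \sum_(t0 <= i < t1) (p i + alpha) < \sum_(t0 <= i < t1) (M0 * q i).
      apply: sum_lt.
        move=> i /andP[i1 i2].
        have hi : (to <= i < tf)%N by rewrite (leq_trans h1 i1) (leq_trans i2 h3).
        have := hno i; rewrite mem_index_iota i1 i2 => /(_ isT).
        case: (eqVneq (q i) 0) => [hqi|hqi] /=.
          by rewrite hqi hqp // add0r mulr0.
        rewrite -ltNge singleE => hl.
        have qpos : 0 < q i by rewrite lt_def hqi hq0.
        by move: hl; rewrite ltr_pdivrMr // => /ltW.
      exists t; split => //.
      have hi : (to <= t < tf)%N by case/andP: ht => i1 i2; rewrite (leq_trans h1 i1) (leq_trans i2 h3).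
      have := hno t; rewrite mem_index_iota ht => /(_ isT).
      rewrite hqt /= -ltNge singleE.
      have qpos : 0 < q t by rewrite lt_def hqt hq0.
      by rewrite ltr_pdivrMr.
    rewrite -mulr_sumr -numE -ltr_pdivrMr // -/(psi p q alpha t0 t1) -/M0.
    by rewrite ltxx.
- move=> [hM hmax]; split; first exact: sub.
  move=> v [t0 [t1 [hin ->]]].
  have hD := Dpos _ _ hin.
  case: hin => h1 h2 h3 _.
  rewrite /psi numE ler_pdivrMr // mulr_sumr.
  apply: ler_sum_nat => i /andP[i1 i2].
  have hi : (to <= i < tf)%N by rewrite (leq_trans h1 i1) (leq_trans i2 h3).
  case: (eqVneq (q i) 0) => [hqi|hqi].
    by rewrite hqi hqp // add0r mulr0.
  have qpos : 0 < q i by rewrite lt_def hqi hq0.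
  have : psi p q alpha i i.+1 <= M by apply: hmax; exists i.
  by rewrite singleE ler_pdivrMr.
Qed.

End Aux.

Theorem corollary2 (R : realFieldType) (to tf : nat) (p q : nat -> R) (alpha : R)
  (htotf : (to < tf)%N)
  (hq0 : forall t, (to <= t < tf)%N -> 0 <= q t)
  (hqp : forall t, (to <= t < tf)%N -> q t = 0 -> p t = 0) :
  ((forall tau, (0 < tau)%N -> rlin alpha tau <= 0) ->
     forall M, is_max (pair_vals p q alpha to tf) M <-> is_max (single_vals p q alpha to tf) M)
  /\
  ((forall tau, (0 < tau)%N -> 0 <= rlin alpha tau) ->
     forall M, is_min (pair_vals p q alpha to tf) M <-> is_min (single_vals p q alpha to tf) M).
Proof.
split.
  move=> hr M; apply: maxpart => //.
  by have := hr 1%N isT; rewrite /rlin mulr1.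
move=> hr M.
have ha : - alpha <= 0 by have := hr 1%N isT; rewrite /rlin mulr1 oppr_le0.
have hqp' : forall t, (to <= t < tf)%N -> q t = 0 -> - p t = 0.
  by move=> t ht hqt; rewrite hqp // oppr0.
have E := @maxpart _ to tf (fun t => - p t) q (- alpha) hq0 hqp' ha (- M).
have P1 : forall v, pair_vals (fun t => - p t) q (- alpha) to tf v <->
                    pair_vals p q alpha to tf (- v).
  move=> v; split.
    by move=> [t0 [t1 [h ->]]]; exists t0, t1; rewrite psiN opprK.
  move=> [t0 [t1 [h hv]]]; exists t0, t1; split => //.
  by rewrite psiN -hv opprK.
have P2 : forall v, single_vals (fun t => - p t) q (- alpha) to tf v <->
                    single_vals p q alpha to tf (- v).
  move=> v; split.
    by move=> [t [h1 h2 ->]]; exists t; rewrite psiN opprK.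
  move=> [t [h1 h2 hv]]; exists t; split => //.
  by rewrite psiN -hv opprK.
have Tmin : forall (S S' : R -> Prop), (forall v, S' v <-> S (- v)) ->
    is_min S M <-> is_max S' (- M).
  move=> S S' hS; split.
    move=> [h1 h2]; split; first by apply/hS; rewrite opprK.
    by move=> v /hS /h2; rewrite lerNr.
  move=> [h1 h2]; split; first by move/hS: h1; rewrite opprK.
  by move=> v hv; rewrite -lerN2; apply: h2; apply/hS; rewrite opprK.
have T1 := Tmin _ _ P1; have T2 := Tmin _ _ P2; tauto.
Qed.
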